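(* Let $L\in\mathcal{N}$ and assume that $L$ is a sublattice of a free lattice. Let $K$ be a convex sublattice of $L$, and let $a\in L$ satisfy $a\parallel b$ for all $b\in K$. Then $|\{a\vee b: b\in K\}|\ge 3$, or $|\{a\wedge b: b\in K\}|\ge 3$, or $K$ is a distributive lattice.
   Context: $\mathcal{N}$ denotes the variety of lattices generated by the pentagon $N_5$. A convex sublattice of $L$ is a sublattice $K$ of $L$ such that whenever $x,z\in K$, $y\in L$ and $x\le y\le z$, then $y\in K$. For elements $x,y$, $x\parallel y$ means neither $x\le y$ nor $y\le x$. *)

(* Defs.v *)
From HB Require Import structures.
From mathcomp Require Import all_boot all_order.
Set Implicit Arguments. Unset Strict Implicit. Unset Printing Implicit Defensive.
Import Order.TTheory.
Local Open Scope order_scope.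

Inductive lterm (V : Type) : Type :=
  | LVar of V
  | LJoin of lterm V & lterm V
  | LMeet of lterm V & lterm V.
Arguments LVar {V}.
Arguments LJoin {V}.
Arguments LMeet {V}.

Fixpoint leval (V A : Type) (j m : A -> A -> A) (v : V -> A) (t : lterm V) : A :=
  match t with
  | LVar x => v x
  | LJoin s u => j (leval j m v s) (leval j m v u)
  | LMeet s u => m (leval j m v s) (leval j m v u)
  end.

Definition lat_eval (V : Type) d (M : latticeType d) (v : V -> M) (t : lterm V) : M :=
  leval (@Order.join d M) (@Order.meet d M) v t.

Inductive N5 : Type := N5bot | N5a | N5b | N5c | N5top.

Definition N5le (x y : N5) : bool :=
  match x, y with
  | N5bot, _ => true
  | _, N5top => true
  | N5a, N5a | N5b, N5b | N5c, N5c => true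
  | N5a, N5c => true
  | _, _ => false
  end.

Definition N5join (x y : N5) : N5 :=
  if N5le x y then y else if N5le y x then x else N5top.
Definition N5meet (x y : N5) : N5 :=
  if N5le x y then x else if N5le y x then y else N5bot.

Definition N5_satisfies (s t : lterm nat) : Prop :=
  forall v : nat -> N5, leval N5join N5meet v s = leval N5join N5meet v t.

(* L belongs to the variety generated by N5: L satisfies every lattice
   identity satisfied by N5 (Birkhoff: HSP(N5) = Mod(Id(N5))). *)
Definition in_var_N5 d (L : latticeType d) : Prop :=
  forall s t : lterm nat, N5_satisfies s t ->
    forall v : nat -> L, lat_eval v s = lat_eval v t.

(* Order of the free lattice FL(X) on terms over X: s <= t in FL(X) iff
   the inequality holds in every lattice under every valuation. *)
Definition FL_le (X : Type) (s t : lterm X) : Prop :=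
  forall d (M : latticeType d) (v : X -> M), lat_eval v s <= lat_eval v t.
Definition FL_eq (X : Type) (s t : lterm X) : Prop := FL_le s t /\ FL_le t s.

(* L is (isomorphic to) a sublattice of a free lattice FL(X): there is an
   injective lattice homomorphism from L to FL(X) (elements of FL(X) being
   terms modulo FL_eq). *)
Definition sublattice_of_free d (L : latticeType d) : Prop :=
  exists (X : Type) (f : L -> lterm X),
    [/\ forall x y, FL_eq (f (x `|` y)) (LJoin (f x) (f y)),
        forall x y, FL_eq (f (x `&` y)) (LMeet (f x) (f y)) &
        forall x y, FL_eq (f x) (f y) -> x = y].

Definition convex_sublattice d (L : latticeType d) (K : L -> Prop) : Prop :=
  [/\ forall x y, K x -> K y -> K (x `|` y),
      forall x y, K x -> K y -> K (x `&` y) &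
      forall x y z, K x -> K z -> x <= y -> y <= z -> K y].

Definition distributive_sub d (L : latticeType d) (K : L -> Prop) : Prop :=
  forall x y z, K x -> K y -> K z -> x `&` (y `|` z) = (x `&` y) `|` (x `&` z).

Definition incomp d (L : latticeType d) (x y : L) : Prop := ~ (x <= y) /\ ~ (y <= x).

(* Main.v *)
From HB Require Import structures.
From mathcomp Require Import all_boot all_order.
Require Import Defs.
Set Implicit Arguments. Unset Strict Implicit. Unset Printing Implicit Defensive.
Import Order.TTheory.
Local Open Scope order_scope.
Section Dbl.
Variables (d : Order.disp_t) (M : latticeType d) (A B : M).

Definition okb (p : M * bool) : bool :=
  if p.2 then A <= p.1 else ~~ (A <= p.1) || (p.1 <= B).

Definition D := {p : M * bool | okb p}.
HB.instance Definition _ := Choice.on D.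

Definition Dle (p q : D) : bool := ((val p).1 <= (val q).1) && ((val p).2 ==> (val q).2).
Definition Dlt (p q : D) : bool := (q != p) && Dle p q.

Lemma Dle_refl : reflexive Dle.
Proof. by move=> p; rewrite /Dle lexx implybb. Qed.
Lemma Dle_anti : antisymmetric Dle.
Proof.
move=> [[m e] He] [[m' e'] He'] /andP[/andP[h1 h2] /andP[h3 h4]] /=.
rewrite /= in h1 h2 h3 h4. apply: val_inj => /=. have -> : m = m' by apply: le_anti; rewrite h1 h3.
by move: h2 h4 {He He'}; case: e; case: e'.
Qed.
Lemma Dle_trans : transitive Dle.
Proof.
move=> [[m e] He] [[m' e'] He'] [[m'' e''] He''] /andP[/= h1 h2] /andP[/= h3 h4].
rewrite /= in h1 h2 h3 h4. apply/andP; split => /=; first exact: le_trans h1 h3.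
by move: h2 h4 {He He' He''}; case: e; case: e'; case: e''.
Qed.

Fact mydisp : Order.disp_t. Proof. exact: Order.Disp tt tt. Qed.
HB.instance Definition _ := Order.isPOrder.Build mydisp D (fun _ _ => erefl) Dle_refl Dle_anti Dle_trans.

Lemma okb_meet (p q : D) : okb ((val p).1 `&` (val q).1, (val p).2 && (val q).2).
Proof.
case: p q => [[m e] He] [[m' e'] He']; rewrite /okb /= in He He' *.
case: e He => He; case: e' He' => He' /=.
- by rewrite lexI He He'.
- case/orP: He' => h; apply/orP; [left|right].
    by apply: contra h => h'; apply: le_trans h' (leIr _ _).
  by apply: le_trans (leIr _ _) h.
- case/orP: He => h; apply/orP; [left|right].
    by apply: contra h => h'; apply: le_trans h' (leIl _ _).
  by apply: le_trans (leIl _ _) h.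
- case/orP: He => h; apply/orP; [left|right].
    by apply: contra h => h'; apply: le_trans h' (leIl _ _).
  by apply: le_trans (leIl _ _) h.
Qed.

Definition Dmeet (p q : D) : D := @exist (M * bool) (fun p => is_true (okb p)) _ (okb_meet p q).

Definition jb (p q : D) : bool :=
  [|| (val p).2, (val q).2 | (A <= (val p).1 `|` (val q).1) && ~~ ((val p).1 `|` (val q).1 <= B)].

Lemma okb_join (p q : D) : okb ((val p).1 `|` (val q).1, jb p q).
Proof.
case: p q => [[m e] He] [[m' e'] He']; rewrite /okb /jb /= in He He' *.
case: e He => He /=; first exact: lexUl.
case: e' He' => He' /=; first exact: lexUr.
by case: (A <= m `|` m'); case: (m `|` m' <= B).
Qed.

Definition Djoin (p q : D) : D := @exist (M * bool) (fun p => is_true (okb p)) _ (okb_join p q).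

Lemma DmeetP x y z : (x <= Dmeet y z) = (x <= y) && (x <= z).
Proof.
case: x y z => [[m e] He] [[m' e'] He'] [[m'' e''] He''].
rewrite /Order.le /= /Dle /= lexI.
by move: He He' He''; case: (m <= m'); case: (m <= m''); case: e; case: e'; case: e''.
Qed.

Lemma DjoinP x y z : (Djoin x y <= z) = (x <= z) && (y <= z).
Proof.
case: x y z => [[m e] He] [[m' e'] He'] [[m'' e''] He''].
rewrite /Order.le /= /Dle /jb /= leUx.
case h1: (m <= m''); case h2: (m' <= m'') => //=; try by rewrite !andbF.
have hj : m `|` m' <= m'' by rewrite leUx h1 h2.
case: e'' He'' => /= He''; first by rewrite !implybT.
rewrite /jb /= !implybF; move: He He'; case: e; case: e' => //= _ _; try by rewrite andbF.
apply/negP => /andP[hA hB].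
rewrite /okb /= in He''.
case/orP: He'' => h.
  by move/negP: h; apply; apply: le_trans hA hj.
by move/negP: hB; apply; apply: le_trans hj h.
Qed.
HB.instance Definition _ := Order.POrder_MeetJoin_isLattice.Build mydisp D DmeetP DjoinP.

Section Eval.
Variables (X : Type) (v : X -> M).
Lemma okb_gen (m : M) : okb (m, (A <= m) && ~~ (m <= B)).
Proof. by rewrite /okb /=; case: (A <= m); case: (m <= B). Qed.
Definition wv (x : X) : D := @exist (M * bool) (fun p => is_true (okb p)) _ (okb_gen (v x)).
Lemma wv_fst (t : lterm X) : (val (lat_eval wv t)).1 = lat_eval v t.
Proof.
elim: t => [x|s IHs u IHu|s IHs u IHu] //=; rewrite /lat_eval /= in IHs IHu *; by rewrite IHs IHu.
Qed.

Lemma snd_true (p : D) : A <= (val p).1 -> ~~ ((val p).1 <= B) -> (val p).2 = true.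
Proof. case: p => [[m e] He] /= h1 h2; move: He; rewrite /okb /=; case: e => //=; by rewrite h1 (negbTE h2). Qed.
Lemma snd_false (p : D) : ~~ (A <= (val p).1) -> (val p).2 = false.
Proof. case: p => [[m e] He] /= h1; move: He; rewrite /okb /=; case: e => //= h; by rewrite h in h1. Qed.

Lemma dbl_fail (s t u w : lterm X) :
  A = lat_eval v s `&` lat_eval v t -> B = lat_eval v u `|` lat_eval v w ->
  ~~ (lat_eval v s <= B) -> ~~ (lat_eval v t <= B) ->
  ~~ (A <= lat_eval v u) -> ~~ (A <= lat_eval v w) ->
  ~~ (lat_eval wv (LMeet s t) <= lat_eval wv (LJoin u w)).
Proof.
move=> hA hB h1 h2 h3 h4.
have es : (val (lat_eval wv s)).2 = true.
  apply: snd_true; rewrite wv_fst //; by rewrite hA leIl.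
have et : (val (lat_eval wv t)).2 = true.
  apply: snd_true; rewrite wv_fst //; by rewrite hA leIr.
have eu : (val (lat_eval wv u)).2 = false by apply: snd_false; rewrite wv_fst.
have ew : (val (lat_eval wv w)).2 = false by apply: snd_false; rewrite wv_fst.
rewrite /lat_eval /= in es et eu ew *.
rewrite /Order.le /= /Dle /= /jb /= es et eu ew /=.
have F := wv_fst; rewrite /lat_eval in F hA hB; by rewrite !F -hB lexx !andbF.
Qed.
End Eval.
End Dbl.

From Stdlib Require Import Classical.

Lemma prod_eval d1 d2 (M1 : latticeType d1) (M2 : latticeType d2) X
  (v1 : X -> M1) (v2 : X -> M2) (t : lterm X) :
  lat_eval (fun x => ((v1 x, v2 x) : M1 *p M2)) t = (lat_eval v1 t, lat_eval v2 t).
Proof.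
elim: t => [x|s IHs u IHu|s IHs u IHu] //=; rewrite /lat_eval /= in IHs IHu *; by rewrite IHs IHu.
Qed.

Lemma not_FL_le X (a b : lterm X) : ~ FL_le a b ->
  exists d (M : latticeType d) (v : X -> M), ~~ (lat_eval v a <= lat_eval v b).
Proof.
move=> h; apply: NNPP => hn; apply: h => d M v.
apply: NNPP => hv; apply: hn; exists d, M, v; by apply/negP.
Qed.

Lemma FL_W X (s t u w : lterm X) : FL_le (LMeet s t) (LJoin u w) ->
  FL_le s (LJoin u w) \/ FL_le t (LJoin u w) \/ FL_le (LMeet s t) u \/ FL_le (LMeet s t) w.
Proof.
move=> H; apply: NNPP => hn.
have [n1 [n2 [n3 n4]]] : ~ FL_le s (LJoin u w) /\ ~ FL_le t (LJoin u w) /\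
   ~ FL_le (LMeet s t) u /\ ~ FL_le (LMeet s t) w by tauto.
case/not_FL_le: n1 => d1 [M1 [v1 h1]].
case/not_FL_le: n2 => d2 [M2 [v2 h2]].
case/not_FL_le: n3 => d3 [M3 [v3 h3]].
case/not_FL_le: n4 => d4 [M4 [v4 h4]].
pose M := ((M1 *p M2) *p (M3 *p M4))%type.
pose v : X -> M := fun x => (((v1 x, v2 x) : M1 *p M2), ((v3 x, v4 x) : M3 *p M4)).
have ev : forall r, lat_eval v r = ((lat_eval v1 r, lat_eval v2 r), (lat_eval v3 r, lat_eval v4 r)).
  elim=> [x|a IHa b IHb|a IHa b IHb] //=; rewrite /lat_eval /= in IHa IHb *; by rewrite IHa IHb.
have := H _ _ (wv (lat_eval v (LMeet s t)) (lat_eval v (LJoin u w)) v).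
apply/negP; apply: dbl_fail => //.
all: rewrite ?ev !leEprod /=.
- by apply: contra h1 => /and3P[/andP[]].
- by apply: contra h2 => /and3P[/andP[]].
- by apply: contra h3 => /and3P[].
- by apply: contra h4 => /and3P[].
Qed.
Section Gen.
Variables (A : Type) (j m : A -> A -> A).
Definition T4 := (A * A * A * A)%type.
Definition pent (w : T4) : T4 := let '(a,x,y,z) := w in
  let z1 := j z x in (a, j x (m y z1), y, m z1 (j x y)).
Definition fJz0 (w : T4) : T4 := let '(a,x,y,z) := w in (a,x,y, m z (j a (m y z))).
Definition fJz1 (w : T4) : T4 := let '(a,x,y,z) := w in (a,x, m y (j a z), z).
Definition fJy0 (w : T4) : T4 := let '(a,x,y,z) := w in (a,x, m y (j a (m y z)), z).
Definition fJy1 (w : T4) : T4 := let '(a,x,y,z) := w in (a, m x (j a y), y, z).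
Definition fMx0 (w : T4) : T4 := let '(a,x,y,z) := w in (a, j x (m a (j x y)), y, z).
Definition fMx1 (w : T4) : T4 := let '(a,x,y,z) := w in (a,x, j y (m a x), z).
Definition fMy0 (w : T4) : T4 := let '(a,x,y,z) := w in (a,x, j y (m a (j x y)), z).
Definition fMy1 (w : T4) : T4 := let '(a,x,y,z) := w in (a,x,y, j z (m a y)).
Definition fW2 (w : T4) : T4 := let '(a,x,y,z) := w in
  let p := j a (m y z) in let q := m a (j x y) in (a, m x (j q (m x p)), y, z).
Definition fW3 (w : T4) : T4 := let '(a,x,y,z) := w in
  let p := j a (m y z) in let q := m a (j x y) in let u := m p (j x q) in (a, j x u, y, z).
Definition sgm (fs : seq (T4 -> T4)) (w : T4) : T4 :=
  pent (foldl (fun w f => f w) (pent w) fs).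
Definition zx (w : T4) : A * A := let '(a,x,y,z) := w in (m z x, z).
Definition g1 (w : T4) : A * A := let '(a,x,y,z) := w in
  let p := j a (m y z) in let q := m a (j x y) in
  let u := m p (j x q) in let v := j q (m x p) in (m u v, u).
Definition s0 (w : A * A * A) : A * A := let '(x,y,z) := w in
  let d := j (m x y) (m x z) in let e := m x (j y z) in
  (m e (j (m e (j d y)) (m e (j d z))), e).
End Gen.

Definition tv : T4 (lterm nat) := (LVar 0, LVar 1, LVar 2, LVar 3).
Definition L1 A j m := [:: @fJz0 A j m; fMx0 j m].
Definition L2 A j m := [:: @fJz0 A j m; fMx1 j m].
Definition L3 A j m := [:: @fJz1 A j m; fMx0 j m].
Definition L4 A j m := [:: @fJz1 A j m; fMx1 j m; fJy1 j m].
Definition L5 A j m := [:: @fJz1 A j m; fMx1 j m; fJy0 j m; fMy1 j m].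
Definition LG A j m := [:: @fJz1 A j m; fMx1 j m; fJy0 j m; fMy0 j m].
Definition LW2 A j m := rcons (@LG A j m) (fW2 j m).
Definition LW3 A j m := rcons (@LG A j m) (fW3 j m).

Lemma N5_L1 : forall a x y z : N5, let r := zx N5meet (sgm N5join N5meet (L1 N5join N5meet) (a,x,y,z)) in r.1 = r.2.
Proof. by do 4! case. Qed.
Lemma T_L1 d (M : latticeType d) : in_var_N5 M -> forall a x y z : M,
  let r := zx Order.meet (sgm Order.join Order.meet (L1 Order.join Order.meet) (a,x,y,z)) in r.1 = r.2.
Proof.
move=> hN a x y z.
have := hN (zx LMeet (sgm LJoin LMeet (L1 LJoin LMeet) tv)).1 (zx LMeet (sgm LJoin LMeet (L1 LJoin LMeet) tv)).2 (fun v => N5_L1 (v 0) (v 1) (v 2) (v 3))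
  (fun n => match n with 0 => a | 1 => x | 2 => y | _ => z end).
by [].
Qed.

Lemma N5_L2 : forall a x y z : N5, let r := zx N5meet (sgm N5join N5meet (L2 N5join N5meet) (a,x,y,z)) in r.1 = r.2.
Proof. by do 4! case. Qed.
Lemma T_L2 d (M : latticeType d) : in_var_N5 M -> forall a x y z : M,
  let r := zx Order.meet (sgm Order.join Order.meet (L2 Order.join Order.meet) (a,x,y,z)) in r.1 = r.2.
Proof.
move=> hN a x y z.
have := hN (zx LMeet (sgm LJoin LMeet (L2 LJoin LMeet) tv)).1 (zx LMeet (sgm LJoin LMeet (L2 LJoin LMeet) tv)).2 (fun v => N5_L2 (v 0) (v 1) (v 2) (v 3))
  (fun n => match n with 0 => a | 1 => x | 2 => y | _ => z end).
by [].
Qed.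

Lemma N5_L3 : forall a x y z : N5, let r := zx N5meet (sgm N5join N5meet (L3 N5join N5meet) (a,x,y,z)) in r.1 = r.2.
Proof. by do 4! case. Qed.
Lemma T_L3 d (M : latticeType d) : in_var_N5 M -> forall a x y z : M,
  let r := zx Order.meet (sgm Order.join Order.meet (L3 Order.join Order.meet) (a,x,y,z)) in r.1 = r.2.
Proof.
move=> hN a x y z.
have := hN (zx LMeet (sgm LJoin LMeet (L3 LJoin LMeet) tv)).1 (zx LMeet (sgm LJoin LMeet (L3 LJoin LMeet) tv)).2 (fun v => N5_L3 (v 0) (v 1) (v 2) (v 3))
  (fun n => match n with 0 => a | 1 => x | 2 => y | _ => z end).
by [].
Qed.

Lemma N5_L4 : forall a x y z : N5, let r := zx N5meet (sgm N5join N5meet (L4 N5join N5meet) (a,x,y,z)) in r.1 = r.2.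
Proof. by do 4! case. Qed.
Lemma T_L4 d (M : latticeType d) : in_var_N5 M -> forall a x y z : M,
  let r := zx Order.meet (sgm Order.join Order.meet (L4 Order.join Order.meet) (a,x,y,z)) in r.1 = r.2.
Proof.
move=> hN a x y z.
have := hN (zx LMeet (sgm LJoin LMeet (L4 LJoin LMeet) tv)).1 (zx LMeet (sgm LJoin LMeet (L4 LJoin LMeet) tv)).2 (fun v => N5_L4 (v 0) (v 1) (v 2) (v 3))
  (fun n => match n with 0 => a | 1 => x | 2 => y | _ => z end).
by [].
Qed.

Lemma N5_L5 : forall a x y z : N5, let r := zx N5meet (sgm N5join N5meet (L5 N5join N5meet) (a,x,y,z)) in r.1 = r.2.
Proof. by do 4! case. Qed.
Lemma T_L5 d (M : latticeType d) : in_var_N5 M -> forall a x y z : M,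
  let r := zx Order.meet (sgm Order.join Order.meet (L5 Order.join Order.meet) (a,x,y,z)) in r.1 = r.2.
Proof.
move=> hN a x y z.
have := hN (zx LMeet (sgm LJoin LMeet (L5 LJoin LMeet) tv)).1 (zx LMeet (sgm LJoin LMeet (L5 LJoin LMeet) tv)).2 (fun v => N5_L5 (v 0) (v 1) (v 2) (v 3))
  (fun n => match n with 0 => a | 1 => x | 2 => y | _ => z end).
by [].
Qed.

Lemma N5_LW2 : forall a x y z : N5, let r := zx N5meet (sgm N5join N5meet (LW2 N5join N5meet) (a,x,y,z)) in r.1 = r.2.
Proof. by do 4! case. Qed.
Lemma T_LW2 d (M : latticeType d) : in_var_N5 M -> forall a x y z : M,
  let r := zx Order.meet (sgm Order.join Order.meet (LW2 Order.join Order.meet) (a,x,y,z)) in r.1 = r.2.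
Proof.
move=> hN a x y z.
have := hN (zx LMeet (sgm LJoin LMeet (LW2 LJoin LMeet) tv)).1 (zx LMeet (sgm LJoin LMeet (LW2 LJoin LMeet) tv)).2 (fun v => N5_LW2 (v 0) (v 1) (v 2) (v 3))
  (fun n => match n with 0 => a | 1 => x | 2 => y | _ => z end).
by [].
Qed.

Lemma N5_LW3 : forall a x y z : N5, let r := zx N5meet (sgm N5join N5meet (LW3 N5join N5meet) (a,x,y,z)) in r.1 = r.2.
Proof. by do 4! case. Qed.
Lemma T_LW3 d (M : latticeType d) : in_var_N5 M -> forall a x y z : M,
  let r := zx Order.meet (sgm Order.join Order.meet (LW3 Order.join Order.meet) (a,x,y,z)) in r.1 = r.2.
Proof.
move=> hN a x y z.
have := hN (zx LMeet (sgm LJoin LMeet (LW3 LJoin LMeet) tv)).1 (zx LMeet (sgm LJoin LMeet (LW3 LJoin LMeet) tv)).2 (fun v => N5_LW3 (v 0) (v 1) (v 2) (v 3))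
  (fun n => match n with 0 => a | 1 => x | 2 => y | _ => z end).
by [].
Qed.

Lemma N5_G1 : forall a x y z : N5, let r := g1 N5join N5meet (sgm N5join N5meet (LG N5join N5meet) (a,x,y,z)) in r.1 = r.2.
Proof. by do 4! case. Qed.
Lemma T_G1 d (M : latticeType d) : in_var_N5 M -> forall a x y z : M,
  let r := g1 Order.join Order.meet (sgm Order.join Order.meet (LG Order.join Order.meet) (a,x,y,z)) in r.1 = r.2.
Proof.
move=> hN a x y z.
have := hN (g1 LJoin LMeet (sgm LJoin LMeet (LG LJoin LMeet) tv)).1 (g1 LJoin LMeet (sgm LJoin LMeet (LG LJoin LMeet) tv)).2 (fun v => N5_G1 (v 0) (v 1) (v 2) (v 3))
  (fun n => match n with 0 => a | 1 => x | 2 => y | _ => z end).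
by [].
Qed.
Lemma N5_s0 : forall x y z : N5, let r := s0 N5join N5meet (x,y,z) in r.1 = r.2.
Proof. by do 3! case. Qed.
Lemma T_s0 d (M : latticeType d) : in_var_N5 M -> forall x y z : M,
  let r := s0 Order.join Order.meet (x,y,z) in r.1 = r.2.
Proof.
move=> hN x y z.
have := hN (s0 LJoin LMeet (LVar 0, LVar 1, LVar 2)).1 (s0 LJoin LMeet (LVar 0, LVar 1, LVar 2)).2 (fun v => N5_s0 (v 0) (v 1) (v 2))
  (fun n => match n with 0 => x | 1 => y | _ => z end).
by [].
Qed.

Lemma FL_le_trans X (a b c : lterm X) : FL_le a b -> FL_le b c -> FL_le a c.
Proof. move=> h1 h2 d M v; exact: le_trans (h1 d M v) (h2 d M v). Qed.

Lemma W_of_free d (L : latticeType d) : sublattice_of_free L ->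
  forall p1 p2 q1 q2 : L, p1 `&` p2 <= q1 `|` q2 ->
  [\/ p1 <= q1 `|` q2, p2 <= q1 `|` q2, p1 `&` p2 <= q1 | p1 `&` p2 <= q2].
Proof.
case=> X [f [hj hm hinj]].
have leF : forall x y : L, x <= y <-> FL_le (f x) (f y).
  move=> x y; split.
    move=> h; have := hm x y; rewrite (meet_l h) => -[h1 _] d' M v.
    apply: le_trans (h1 d' M v) _; rewrite /lat_eval /=; exact: leIr.
  move=> h; apply/meet_idPl; apply: hinj; split.
    apply: FL_le_trans (proj1 (hm x y)) _ => d' M v; rewrite /lat_eval /=; exact: leIl.
  apply: FL_le_trans _ (proj2 (hm x y)) => d' M v; rewrite /lat_eval /=.
  by rewrite lexI lexx; exact: h.
move=> p1 p2 q1 q2 /leF h.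
have h' : FL_le (LMeet (f p1) (f p2)) (LJoin (f q1) (f q2)).
  apply: FL_le_trans (proj2 (hm p1 p2)) _; apply: FL_le_trans h _; exact: proj1 (hj q1 q2).
have tJ : forall r, FL_le r (LJoin (f q1) (f q2)) -> FL_le r (f (q1 `|` q2)).
  move=> r hr; apply: FL_le_trans hr (proj2 (hj q1 q2)).
have tM : forall r, FL_le (LMeet (f p1) (f p2)) r -> FL_le (f (p1 `&` p2)) r.
  move=> r hr; apply: FL_le_trans (proj1 (hm p1 p2)) hr.
case: (FL_W h') => [c|[c|[c|c]]].
- by apply: Or41; apply/leF; apply: tJ.
- by apply: Or42; apply/leF; apply: tJ.
- by apply: Or43; apply/leF; apply: tM.
- by apply: Or44; apply/leF; apply: tM.
Qed.


Arguments pent : simpl never.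
Arguments fJz0 : simpl never. Arguments fJz1 : simpl never.
Arguments fJy0 : simpl never. Arguments fJy1 : simpl never.
Arguments fMx0 : simpl never. Arguments fMx1 : simpl never.
Arguments fMy0 : simpl never. Arguments fMy1 : simpl never.
Arguments fW2 : simpl never. Arguments fW3 : simpl never.
Arguments zx : simpl never. Arguments g1 : simpl never. Arguments sgm : simpl never.

Section Core.
Variables (d : Order.disp_t) (L : latticeType d).
Local Notation J := (@Order.join d L).
Local Notation Mt := (@Order.meet d L).

Lemma core (K : L -> Prop) (a : L) :
  in_var_N5 L ->
  (forall p1 p2 q1 q2 : L, p1 `&` p2 <= q1 `|` q2 ->
     [\/ p1 <= q1 `|` q2, p2 <= q1 `|` q2, p1 `&` p2 <= q1 | p1 `&` p2 <= q2]) ->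
  convex_sublattice K ->
  (forall b, K b -> incomp a b) ->
  (forall b1 b2 b3, K b1 -> K b2 -> K b3 ->
     [\/ a `|` b1 = a `|` b2, a `|` b1 = a `|` b3 | a `|` b2 = a `|` b3]) ->
  (forall b1 b2 b3, K b1 -> K b2 -> K b3 ->
     [\/ a `&` b1 = a `&` b2, a `&` b1 = a `&` b3 | a `&` b2 = a `&` b3]) ->
  forall x y z, K x -> K y -> K z -> x <= z -> y `&` x = y `&` z -> y `|` x = y `|` z ->
  z <= x.
Proof.
move=> hN hW [hKj hKm hKc] hinc hJ3 hM3 x y z Kx Ky Kz hxz hyx hyj.
pose o := y `&` z. pose i := x `|` y.
have Ko : K o := hKm _ _ Ky Kz.
have Ki : K i := hKj _ _ Kx Ky.
have ox : o <= x by rewrite /o -hyx leIr.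
have oy : o <= y := leIl _ _.
have oz : o <= z := leIr _ _.
have xi : x <= i := leUl _ _.
have yi : y <= i := leUr _ _.
have zi : z <= i by rewrite /i joinC hyj leUr.
have hJ : forall b, K b -> b <= i -> (a `|` b <= a `|` o) \/ (i <= a `|` b).
  move=> b Kb bi; case: (hJ3 _ _ _ Ko Ki Kb) => e.
  - by left; rewrite e; apply: leU2.
  - by left; rewrite e.
  - by right; rewrite -e leUr.
have hM : forall b, K b -> o <= b -> (a `&` i <= a `&` b) \/ (a `&` b <= o).
  move=> b Kb ob; case: (hM3 _ _ _ Ko Ki Kb) => e.
  - by left; rewrite -e; apply: leI2.
  - by right; rewrite -e leIr.
  - by left; rewrite e.
have pid : pent J Mt (a,x,y,z) = (a,x,y,z).
  by rewrite /pent /= (join_l hxz) (join_l ox) (meet_l zi).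
have key : forall r : T4 L, r = (a,x,y,z) -> (zx Mt r).1 = (zx Mt r).2 -> z <= x.
  by move=> r -> e; apply/meet_idPl; exact: e.
have fJz0_id : z <= a `|` o -> fJz0 J Mt (a,x,y,z) = (a,x,y,z).
  by move=> h; rewrite /fJz0 /= (meet_l h).
have fJz1_id : y <= a `|` z -> fJz1 J Mt (a,x,y,z) = (a,x,y,z).
  by move=> h; rewrite /fJz1 /= (meet_l h).
have fJy0_id : y <= a `|` o -> fJy0 J Mt (a,x,y,z) = (a,x,y,z).
  by move=> h; rewrite /fJy0 /= (meet_l h).
have fJy1_id : x <= a `|` y -> fJy1 J Mt (a,x,y,z) = (a,x,y,z).
  by move=> h; rewrite /fJy1 /= (meet_l h).
have fMx0_id : a `&` i <= x -> fMx0 J Mt (a,x,y,z) = (a,x,y,z).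
  by move=> h; rewrite /fMx0 /= (join_l h).
have fMx1_id : a `&` x <= y -> fMx1 J Mt (a,x,y,z) = (a,x,y,z).
  by move=> h; rewrite /fMx1 /= (join_l h).
have fMy0_id : a `&` i <= y -> fMy0 J Mt (a,x,y,z) = (a,x,y,z).
  by move=> h; rewrite /fMy0 /= (join_l h).
have fMy1_id : a `&` y <= z -> fMy1 J Mt (a,x,y,z) = (a,x,y,z).
  by move=> h; rewrite /fMy1 /= (join_l h).
case: (hJ z Kz zi) => Jz.
  have Jz' : z <= a `|` o := le_trans (leUr z a) Jz.
  case: (hM x Kx ox) => Mx.
    have Mx' : a `&` i <= x := le_trans Mx (leIr x a).
    apply: (key _ _ (T_L1 hN a x y z)).
    by rewrite /sgm /= pid (fJz0_id Jz') (fMx0_id Mx') pid.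
  have Mx' : a `&` x <= y := le_trans Mx oy.
  apply: (key _ _ (T_L2 hN a x y z)).
  by rewrite /sgm /= pid (fJz0_id Jz') (fMx1_id Mx') pid.
have Jz' : y <= a `|` z := le_trans yi Jz.
case: (hM x Kx ox) => Mx.
  have Mx' : a `&` i <= x := le_trans Mx (leIr x a).
  apply: (key _ _ (T_L3 hN a x y z)).
  by rewrite /sgm /= pid (fJz1_id Jz') (fMx0_id Mx') pid.
have Mx' : a `&` x <= y := le_trans Mx oy.
case: (hJ y Ky yi) => Jy; last first.
  have Jy' : x <= a `|` y := le_trans xi Jy.
  apply: (key _ _ (T_L4 hN a x y z)).
  by rewrite /sgm /= pid (fJz1_id Jz') (fMx1_id Mx') (fJy1_id Jy') pid.
have Jy' : y <= a `|` o := le_trans (leUr y a) Jy.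
case: (hM y Ky oy) => My; last first.
  have My' : a `&` y <= z := le_trans My oz.
  apply: (key _ _ (T_L5 hN a x y z)).
  by rewrite /sgm /= pid (fJz1_id Jz') (fMx1_id Mx') (fJy0_id Jy') (fMy1_id My') pid.
have My' : a `&` i <= y := le_trans My (leIr y a).
have sG : sgm J Mt (LG J Mt) (a,x,y,z) = (a,x,y,z).
  by rewrite /sgm /= pid (fJz1_id Jz') (fMx1_id Mx') (fJy0_id Jy') (fMy0_id My') pid.
pose p := a `|` o. pose q := a `&` i.
have uw : p `&` (x `|` q) <= q `|` (x `&` p).
  have e : (g1 J Mt (a,x,y,z)).1 = (g1 J Mt (a,x,y,z)).2.
    rewrite -[in X in X = _]sG -[in X in _ = X]sG; exact: (T_G1 hN a x y z).
  rewrite /g1 /= in e.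
  by apply/meet_idPl; exact: e.
have op : o <= p := leUr _ _.
have qi : q <= i := leIr _ _.
case: (hW _ _ _ _ uw) => h.
- have Kw : K (q `|` (x `&` p)).
    apply: (hKc o _ i Ko Ki).
      by apply: lexUr; rewrite lexI ox op.
    by rewrite leUx qi /=; apply: le_trans (leIl _ _) xi.
  case: (hinc _ Kw) => h1 _; apply: False_ind; apply: h1.
  exact: le_trans (leUl a o) h.
- have hx : x <= q `|` (x `&` p) := le_trans (leUl x q) h.
  apply: (key _ _ (T_LW2 hN a x y z)).
  rewrite /sgm /LW2 /LG /= pid (fJz1_id Jz') (fMx1_id Mx') (fJy0_id Jy') (fMy0_id My').
  by rewrite /fW2 /= (meet_l hx) pid.
- have Ku : K (p `&` (x `|` q)).
    apply: (hKc o _ i Ko Ki).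
      by rewrite lexI op /=; apply: lexUl.
    by apply: leIxr; rewrite leUx xi qi.
  case: (hinc _ Ku) => _ h1; apply: False_ind; apply: h1.
  exact: le_trans h (leIl a i).
- have hx : p `&` (x `|` q) <= x := le_trans h (leIl x p).
  apply: (key _ _ (T_LW3 hN a x y z)).
  rewrite /sgm /LW3 /LG /= pid (fJz1_id Jz') (fMx1_id Mx') (fJy0_id Jy') (fMy0_id My').
  by rewrite /fW3 /= (join_l hx) pid.
Qed.
End Core.

Theorem lemma5p1 : forall d (L : latticeType d) (K : L -> Prop) (a : L),
  in_var_N5 L ->
  sublattice_of_free L ->
  convex_sublattice K ->
  (forall b, K b -> incomp a b) ->
  (exists b1 b2 b3, [/\ K b1, K b2, K b3 &
      [/\ a `|` b1 <> a `|` b2, a `|` b1 <> a `|` b3 & a `|` b2 <> a `|` b3]])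
  \/ (exists b1 b2 b3, [/\ K b1, K b2, K b3 &
      [/\ a `&` b1 <> a `&` b2, a `&` b1 <> a `&` b3 & a `&` b2 <> a `&` b3]])
  \/ distributive_sub K.
Proof.
move=> d L K a hN hF hK hinc.
have hW := W_of_free hF.
case: (classic (exists b1 b2 b3, [/\ K b1, K b2, K b3 &
      [/\ a `|` b1 <> a `|` b2, a `|` b1 <> a `|` b3 & a `|` b2 <> a `|` b3]])) => [h|nJ].
  by left.
case: (classic (exists b1 b2 b3, [/\ K b1, K b2, K b3 &
      [/\ a `&` b1 <> a `&` b2, a `&` b1 <> a `&` b3 & a `&` b2 <> a `&` b3]])) => [h|nM].
  by right; left.
right; right.
have hJ3 : forall b1 b2 b3, K b1 -> K b2 -> K b3 ->
     [\/ a `|` b1 = a `|` b2, a `|` b1 = a `|` b3 | a `|` b2 = a `|` b3].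
  move=> b1 b2 b3 k1 k2 k3; apply: NNPP => hn; apply: nJ; exists b1, b2, b3.
  split => //; split => e; apply: hn; [exact: Or31|exact: Or32|exact: Or33].
have hM3 : forall b1 b2 b3, K b1 -> K b2 -> K b3 ->
     [\/ a `&` b1 = a `&` b2, a `&` b1 = a `&` b3 | a `&` b2 = a `&` b3].
  move=> b1 b2 b3 k1 k2 k3; apply: NNPP => hn; apply: nM; exists b1, b2, b3.
  split => //; split => e; apply: hn; [exact: Or31|exact: Or32|exact: Or33].
move=> x0 y0 z0 Kx Ky Kz.
have [hKj hKm hKc] := hK.
pose dd := (x0 `&` y0) `|` (x0 `&` z0).
pose e := x0 `&` (y0 `|` z0).
have de : dd <= e.
  by rewrite leUx !lexI !leIl (le_trans (leIr y0 x0) (leUl y0 z0)) (le_trans (leIr z0 x0) (leUr z0 y0)).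
have Kdd : K dd by apply: hKj; apply: hKm.
have Ke : K e by apply: hKm => //; apply: hKj.
have step : forall q, K q -> q `&` e <= dd -> e `&` (dd `|` q) <= dd.
  move=> q Kq hq.
  have KZ : K (e `&` (dd `|` q)) by apply: hKm => //; apply: hKj.
  apply: (core hN hW hK hinc hJ3 hM3 Kdd Kq KZ).
  - by rewrite lexI de leUl.
  - apply: le_anti; rewrite leI2 //=; last by rewrite lexI de leUl.
    rewrite lexI leIl /=; apply: le_trans _ hq.
    by rewrite lexI leIl /= (le_trans (leIr _ _) (leIl _ _)).
  - apply: le_anti; rewrite leU2 //=; last by rewrite lexI de leUl.
    by rewrite leUx leUl /= (le_trans (leIr _ _)) // joinC.
have s := T_s0 hN x0 y0 z0; rewrite /s0 /= in s.
apply: le_anti; rewrite de andbT.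
have h1 : e <= (e `&` (dd `|` y0)) `|` (e `&` (dd `|` z0)) by apply/meet_idPl; exact: s.
apply: le_trans h1 _; rewrite leUx; apply/andP; split; apply: step => //.
- apply: le_trans (leUl _ _); rewrite lexI; apply/andP; split; last exact: leIl.
  by rewrite /e meetCA leIl.
- apply: le_trans (leUr _ _); rewrite lexI; apply/andP; split; last exact: leIl.
  by rewrite /e meetCA leIl.
Qed.
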